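(* Let $X_1,\dots,X_n$ be locally bounded $F$-spaces and $\Phi$ a Young function satisfying the Mulholland condition. Then the $F$-space $\big(\bigoplus_{i=1}^nX_i,d_\Phi\big)$ is locally bounded.
   Context: An $F$-space is a vector space with a complete translation-invariant metric $d$ for which addition and scalar multiplication are continuous; $\|x\|_i=d_i(x,0)$. $d_\Phi((x_i),(y_i))=\Phi^{-1}\big(\sum_i\Phi(\|x_i-y_i\|_i)\big)$. A topological vector space is locally bounded if there is an open neighborhood $A$ of $0$ such that for every open neighborhood $U$ of $0$ there is $t>0$ with $A\subset sU$ for all $s>t$. A Young function is a convex, left semicontinuous, even $\Phi:\mathbb R\to[0,\infty]$ with $\Phi(0)=0$, $\lim_{x\to\infty}\Phi(x)=\infty$; the Mulholland condition means $\Phi$ is continuous, strictly increasing on $[0,\infty)$, and $\log\Phi(x)$ is convex in $\log x$. *)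

(* Defs.v *)
From Stdlib Require Import Reals ClassicalEpsilon.
From mathcomp Require Import ssreflect ssrfun ssrbool eqtype ssrnat fintype bigop.
Set Implicit Arguments.
Unset Strict Implicit.
Open Scope R_scope.

Definition is_vector_space (V : Type) (zero : V) (add : V -> V -> V)
  (opp : V -> V) (smul : R -> V -> V) : Prop :=
  (forall x y z, add x (add y z) = add (add x y) z) /\
  (forall x y, add x y = add y x) /\
  (forall x, add x zero = x) /\
  (forall x, add x (opp x) = zero) /\
  (forall a b x, smul a (smul b x) = smul (a * b) x) /\
  (forall x, smul 1 x = x) /\
  (forall a x y, smul a (add x y) = add (smul a x) (smul a y)) /\
  (forall a b x, smul (a + b) x = add (smul a x) (smul b x)).

Definition is_metric (V : Type) (d : V -> V -> R) : Prop :=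
  (forall x y, 0 <= d x y) /\
  (forall x y, d x y = 0 <-> x = y) /\
  (forall x y, d x y = d y x) /\
  (forall x y z, d x z <= d x y + d y z).

Definition is_complete (V : Type) (d : V -> V -> R) : Prop :=
  forall u : nat -> V,
    (forall e, 0 < e -> exists N : nat, forall m k : nat,
        (N <= m)%coq_nat -> (N <= k)%coq_nat -> d (u m) (u k) < e) ->
    exists l : V, forall e, 0 < e -> exists N : nat, forall m : nat,
        (N <= m)%coq_nat -> d (u m) l < e.

Definition translation_invariant (V : Type) (add : V -> V -> V) (d : V -> V -> R) :=
  forall x y z, d (add x z) (add y z) = d x y.

Definition add_continuous (V : Type) (add : V -> V -> V) (d : V -> V -> R) :=
  forall x y e, 0 < e -> exists delta, 0 < delta /\ forall x' y',
    d x x' < delta -> d y y' < delta -> d (add x y) (add x' y') < e.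

Definition smul_continuous (V : Type) (smul : R -> V -> V) (d : V -> V -> R) :=
  forall a x e, 0 < e -> exists delta, 0 < delta /\ forall b x',
    Rabs (a - b) < delta -> d x x' < delta -> d (smul a x) (smul b x') < e.

Record FSpace := {
  fs_car :> Type;
  fs_zero : fs_car;
  fs_add : fs_car -> fs_car -> fs_car;
  fs_opp : fs_car -> fs_car;
  fs_smul : R -> fs_car -> fs_car;
  fs_dist : fs_car -> fs_car -> R;
  fs_vs : is_vector_space fs_zero fs_add fs_opp fs_smul;
  fs_metric : is_metric fs_dist;
  fs_tinv : translation_invariant fs_add fs_dist;
  fs_complete : is_complete fs_dist;
  fs_add_cont : add_continuous fs_add fs_dist;
  fs_smul_cont : smul_continuous fs_smul fs_dist
}.

Definition fs_sub (X : FSpace) (x y : fs_car X) : fs_car X := fs_add x (fs_opp y).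
Definition fs_norm (X : FSpace) (x : fs_car X) : R := fs_dist x (fs_zero X).

Definition d_open (V : Type) (d : V -> V -> R) (A : V -> Prop) : Prop :=
  forall x, A x -> exists r, 0 < r /\ forall y, d x y < r -> A y.

Definition scale_set (V : Type) (smul : R -> V -> V) (s : R) (U : V -> Prop) : V -> Prop :=
  fun v => exists u, U u /\ v = smul s u.

Definition locally_bounded (V : Type) (zero : V) (smul : R -> V -> V)
  (d : V -> V -> R) : Prop :=
  exists A : V -> Prop, d_open d A /\ A zero /\
    forall U : V -> Prop, d_open d U -> U zero ->
      exists t, 0 < t /\ forall s, s > t ->
        forall x, A x -> scale_set smul s U x.

Definition FSpace_locally_bounded (X : FSpace) : Prop :=
  locally_bounded (fs_zero X) (@fs_smul X) (@fs_dist X).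

(* Phi is taken real-valued: the Mulholland condition (strictly increasing on
   [0,oo)) forces finiteness of an extended-valued Young function. *)
Definition young_function (Phi : R -> R) : Prop :=
  (forall x y t, 0 <= t <= 1 ->
     Phi (t * x + (1 - t) * y) <= t * Phi x + (1 - t) * Phi y) /\
  (forall x e, 0 < e -> exists delta, 0 < delta /\
     forall y, Rabs (y - x) < delta -> Phi x - e < Phi y) /\
  (forall x, Phi (- x) = Phi x) /\
  (forall x, 0 <= Phi x) /\
  Phi 0 = 0 /\
  (forall M, exists N, forall x, N <= x -> M <= Phi x).

Definition mulholland (Phi : R -> R) : Prop :=
  (forall x, continuity_pt Phi x) /\
  (forall x y, 0 <= x -> x < y -> Phi x < Phi y) /\
  (* log Phi(x) is convex in log x, i.e. u |-> ln (Phi (exp u)) is convex *)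
  (forall u v t, 0 <= t <= 1 ->
     ln (Phi (exp (t * u + (1 - t) * v)))
       <= t * ln (Phi (exp u)) + (1 - t) * ln (Phi (exp v))).

Definition Phi_inv (Phi : R -> R) (s : R) : R :=
  epsilon (inhabits 0) (fun y => 0 <= y /\ Phi y = s).

Definition dsum (n : nat) (X : 'I_n -> FSpace) : Type := forall i : 'I_n, X i.

Definition dsum_zero (n : nat) (X : 'I_n -> FSpace) : dsum X :=
  fun i => fs_zero (X i).

Definition dsum_smul (n : nat) (X : 'I_n -> FSpace) (a : R) (x : dsum X) : dsum X :=
  fun i => fs_smul a (x i).

Definition d_Phi (Phi : R -> R) (n : nat) (X : 'I_n -> FSpace) (x y : dsum X) : R :=
  Phi_inv Phi (\big[Rplus/0]_(i < n) Phi (@fs_norm (X i) (@fs_sub (X i) (x i) (y i)))).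

(* Main.v *)
Require Import Defs.
From Stdlib Require Import Reals.
From mathcomp Require Import ssreflect fintype.
From Stdlib Require Import Lra ClassicalEpsilon FunctionalExtensionality.
From mathcomp Require Import ssrfun ssrbool eqtype ssrnat bigop.
Open Scope R_scope.

Lemma ord_split n (P : 'I_n.+1 -> Prop) :
  P ord0 -> (forall j : 'I_n, P (lift ord0 j)) -> forall i, P i.
Proof.
move=> H0 Hl [[|m] hm].
  have -> : Ordinal hm = ord0 by apply: val_inj.
  exact: H0.
have h : (m < n)%N by exact: hm.
have -> : Ordinal hm = lift ord0 (Ordinal h) by apply: val_inj.
exact: Hl.
Qed.

Lemma sum_nonneg n (f : 'I_n -> R) :
  (forall i, 0 <= f i) -> 0 <= \big[Rplus/0]_(i<n) f i.
Proof.
move=> H; apply: (big_ind (fun x => 0 <= x)) => //; [lra | move=> x y; lra].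
Qed.
Arguments sum_nonneg {n}.


Lemma sum_le_const n (f : 'I_n -> R) c :
  (forall i, f i <= c) -> \big[Rplus/0]_(i<n) f i <= INR n * c.
Proof.
elim: n f => [|n IH] f H; first by rewrite big_ord0 /=; lra.
rewrite big_ord_recl S_INR.
have := IH (fun i => f (lift ord0 i)) (fun i => H _).
have := H ord0. simpl. lra.
Qed.
Arguments sum_le_const {n}.


Lemma term_le_sum n (f : 'I_n -> R) :
  (forall i, 0 <= f i) -> forall j, f j <= \big[Rplus/0]_(i<n) f i.
Proof.
elim: n f => [|n IH] f H; first by case.
rewrite big_ord_recl; apply: ord_split => /=.
  have := sum_nonneg (fun i => f (lift ord0 i)) (fun i => H _) => /=; lra.
move=> j; have := IH (fun i => f (lift ord0 i)) (fun i => H _) j => /=.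
have := H ord0; lra.
Qed.
Arguments term_le_sum {n}.


Lemma finite_min n (g : 'I_n -> R) :
  (forall i, 0 < g i) -> exists r, 0 < r /\ forall i, r <= g i.
Proof.
elim: n g => [|n IH] g H; first by exists 1; split; [lra | case].
have [r0 [r0p Hr0]] := IH (fun i => g (lift ord0 i)) (fun i => H _).
exists (Rmin r0 (g ord0)); split.
  apply: Rmin_pos => //; exact: H.
apply: ord_split; first by apply: Rmin_r.
move=> j; apply: Rle_trans (Hr0 j); apply: Rmin_l.
Qed.
Arguments finite_min {n}.


Lemma norm_sub (X : FSpace) (x y : fs_car X) : fs_norm (fs_sub x y) = fs_dist x y.
Proof.
rewrite /fs_norm /fs_sub.
have [_ [_ [_ [Hopp _]]]] := fs_vs X.
rewrite -(Hopp y); apply: fs_tinv.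
Qed.

Lemma Phi_mono_le Phi : mulholland Phi -> forall x y, 0 <= x -> x <= y -> Phi x <= Phi y.
Proof.
move=> [_ [Hm _]] x y hx hxy; case: (Rle_lt_or_eq_dec _ _ hxy) => h.
  by left; apply: Hm.
by subst; right.
Qed.
Arguments Phi_mono_le {Phi}.


Lemma Phi_inv_spec Phi : young_function Phi -> mulholland Phi ->
  forall S, 0 <= S -> 0 <= Phi_inv Phi S /\ Phi (Phi_inv Phi S) = S.
Proof.
move=> Hy Hm S hS; rewrite /Phi_inv; apply: (epsilon_spec (inhabits 0) (fun y => 0 <= y /\ Phi y = S)).
have [_ [_ [_ [Hnn [H0 Hunb]]]]] := Hy.
case: (Rle_lt_or_eq_dec _ _ hS) => hS'; last first.
  by exists 0; split; [lra | rewrite H0].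
have [N HN] := Hunb (S + 1).
have HPx := HN (Rmax N 1) (Rmax_l _ _).
have hx1 := Rmax_r N 1.
have Hc : continuity (Phi - fct_cte S)%F.
  move=> x; apply: continuity_pt_minus; first by case: Hm.
  exact: continuity_pt_const.
have [z [hz Hz]] := IVT (Phi - fct_cte S)%F 0 (Rmax N 1) Hc ltac:(lra)
  ltac:(rewrite /minus_fct /fct_cte H0; lra) ltac:(rewrite /minus_fct /fct_cte; lra).
exists z; split; first lra.
move: Hz; rewrite /minus_fct /fct_cte; lra.
Qed.
Arguments Phi_inv_spec {Phi}.


Lemma Phi_inv_lt Phi : young_function Phi -> mulholland Phi ->
  forall S r, 0 <= S -> 0 <= r -> S < Phi r -> Phi_inv Phi S < r.
Proof.
move=> Hy Hm S r hS hr hSr.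
have [h1 h2] := Phi_inv_spec Hy Hm _ hS.
case: (Rlt_or_le (Phi_inv Phi S) r) => // h.
have := Phi_mono_le Hm _ _ hr h; lra.
Qed.
Arguments Phi_inv_lt {Phi}.


Lemma Phi_le_inv Phi : young_function Phi -> mulholland Phi ->
  forall S d, 0 <= S -> 0 <= d -> Phi d <= S -> d <= Phi_inv Phi S.
Proof.
move=> Hy Hm S d hS hd hdS.
have [h1 h2] := Phi_inv_spec Hy Hm _ hS.
case: (Rle_or_lt d (Phi_inv Phi S)) => // h.
have [_ [Hmm _]] := Hm.
have := Hmm _ _ h1 h; lra.
Qed.
Arguments Phi_le_inv {Phi}.


Theorem mainTheorem7 (n : nat) (X : 'I_n -> FSpace) (Phi : R -> R) :
  (forall i, FSpace_locally_bounded (X i)) ->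
  young_function Phi -> mulholland Phi ->
  locally_bounded (@dsum_zero n X) (@dsum_smul n X) (@d_Phi Phi n X).
Proof.
move=> HX Hy Hm.
have Hnn : forall x, 0 <= Phi x by case: Hy => [_ [_ [_ [H _]]]].
have H0 : Phi 0 = 0 by case: Hy => [_ [_ [_ [_ [H _]]]]].
have [Hcont [Hstr _]] := Hm.
pose Af := fun i => proj1_sig (constructive_indefinite_description _ (HX i)).
have HAf : forall i, d_open (@fs_dist (X i)) (Af i) /\ Af i (fs_zero (X i)) /\
    (forall U, d_open (@fs_dist (X i)) U -> U (fs_zero (X i)) ->
      exists t, 0 < t /\ forall s, s > t -> forall x, Af i x ->
        scale_set (@fs_smul (X i)) s U x).
  by move=> i; exact: (proj2_sig (constructive_indefinite_description _ (HX i))).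
exists (fun x : dsum X => forall i, Af i (x i)); split; [|split].
- move=> x Ax.
  have Hr : forall i, exists r, 0 < r /\ forall y, fs_dist (x i) y < r -> Af i y.
    by move=> i; have [Ho _] := HAf i; exact: Ho.
  pose rf := fun i => proj1_sig (constructive_indefinite_description _ (Hr i)).
  have Hrf : forall i, 0 < rf i /\ forall y, fs_dist (x i) y < rf i -> Af i y.
    by move=> i; exact: (proj2_sig (constructive_indefinite_description _ (Hr i))).
  have [r [rp Hrr]] := finite_min rf (fun i => proj1 (Hrf i)).
  exists r; split => // y Hy' i.
  apply: (proj2 (Hrf i)); apply: Rlt_le_trans (Hrr i).
  apply: Rle_lt_trans Hy'; rewrite /d_Phi.
  have Hd : forall j, 0 <= fs_dist (x j) (y j).
    by move=> j; have [Hp _] := fs_metric (X j); exact: Hp.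
  apply: Phi_le_inv => //; first by apply: sum_nonneg.
  rewrite -norm_sub.
  apply: (term_le_sum (fun j => Phi (fs_norm (fs_sub (x j) (y j))))) => j.
  exact: Hnn.
- by move=> i; have [_ [Hz _]] := HAf i; exact: Hz.
move=> U HU U0.
have [r [rp HrU]] := HU _ U0.
have Phir : 0 < Phi r by rewrite -H0; apply: Hstr; lra.
have Hn1 : 0 < INR n + 1 by have := pos_INR n; lra.
have [r' [r'p Hr']] : exists r', 0 < r' /\ Phi r' < Phi r / (INR n + 1).
  have := Hcont 0; rewrite /continuity_pt /continue_in /limit1_in /limit_in.
  move=> /(_ (Phi r / (INR n + 1))) [].
    apply: Rdiv_lt_0_compat => //.
  move=> alp [alpp Halp]; exists (alp / 2); split; first lra.
  have := Halp (alp / 2); rewrite /dist /= /R_dist H0 Rminus_0_r Rminus_0_r.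
  move=> /(_ _) H; have := H ltac:(split; [split; [done | lra] | rewrite Rabs_pos_eq; lra]).
  move=> /Rabs_def2 [? ?]; done.
pose B := fun i (y : fs_car (X i)) => fs_dist (fs_zero (X i)) y < r'.
have HB : forall i, exists t, 0 < t /\ forall s, s > t -> forall x, Af i x ->
    scale_set (@fs_smul (X i)) s (B i) x.
  move=> i; have [_ [_ Hb]] := HAf i; apply: Hb; last first.
    rewrite /B; have [_ [Hz _]] := fs_metric (X i).
    by rewrite (proj2 (Hz _ _) erefl).
  move=> y; rewrite /B => hy; exists (r' - fs_dist (fs_zero (X i)) y); split; first lra.
  move=> z hz; have [_ [_ [_ Ht]]] := fs_metric (X i).
  have := Ht (fs_zero (X i)) y z; lra.
pose tf := fun i => proj1_sig (constructive_indefinite_description _ (HB i)).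
have Htf : forall i, 0 < tf i /\ forall s, s > tf i -> forall x, Af i x ->
    scale_set (@fs_smul (X i)) s (B i) x.
  by move=> i; exact: (proj2_sig (constructive_indefinite_description _ (HB i))).
pose M := \big[Rplus/0]_(i<n) Rabs (tf i).
have HM : forall i, tf i <= M.
  move=> i; apply: Rle_trans (Rle_abs _) _.
  exact: (term_le_sum (fun i => Rabs (tf i)) (fun i => Rabs_pos _)).
have M0 : 0 <= M by apply: sum_nonneg => i; apply: Rabs_pos.
exists (M + 1); split; first lra.
move=> s hs x Ax.
have Hsc : forall i, scale_set (@fs_smul (X i)) s (B i) (x i).
  move=> i; apply: (proj2 (Htf i)) => //; have := HM i; lra.
pose uf := fun i => proj1_sig (constructive_indefinite_description _ (Hsc i)).
have Huf : forall i, B i (uf i) /\ x i = fs_smul s (uf i).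
  by move=> i; exact: (proj2_sig (constructive_indefinite_description _ (Hsc i))).
exists (uf : dsum X); split; last first.
  apply: functional_extensionality_dep => i; exact: (proj2 (Huf i)).
apply: HrU; rewrite /d_Phi.
apply: Phi_inv_lt => //; try lra.
  by apply: sum_nonneg.
apply: Rle_lt_trans (sum_le_const _ (Phi r') _) _.
  move=> i; rewrite norm_sub; apply: Phi_mono_le => //.
    by have [Hp _] := fs_metric (X i); exact: Hp.
  left; exact: (proj1 (Huf i)).
have := Hnn r'.
have : INR n * Phi r' <= (INR n + 1) * Phi r' by have := Hnn r'; nra.
have : (INR n + 1) * Phi r' < Phi r.
  have := Rmult_lt_compat_l _ _ _ Hn1 Hr'.
  by rewrite /Rdiv -Rmult_assoc (Rmult_comm _ (Phi r)) Rmult_assoc Rinv_r ?Rmult_1_r; lra.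
lra.
Qed.
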